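(* Let $\zeta$ be a uniform binary substitution that is not primitive. Then for every $y\in X_\zeta$, every $m,\ell\in\mathbb N$ and every $\varepsilon>0$, \[ C_\ell(y^{(m)},\infty,\varepsilon)=\mathrm{RR}_\ell(y^{(m)},\infty,\varepsilon)=\mathrm{DET}_\ell(y^{(m)},\infty,\varepsilon)=1 \quad\text{and}\quad \mathrm{L}_\ell(y^{(m)},\infty,\varepsilon)=\infty . \]
   Context: Alphabet $A=\{0,1\}$, $\Sigma=A^{\mathbb N_0}$ with metric $\rho(y,z)=2^{-\min\{i\ge0:\,y_i\ne z_i\}}$ ($y\ne z$), $\rho(y,y)=0$, shift $\sigma$. A uniform binary substitution is a map $\zeta:A\to A^*$ with $|\zeta(0)|=|\zeta(1)|=q\ge2$, extended to words by concatenation; $\mathcal L_\zeta$ is the set of subwords of words $\zeta^k(a)$, $a\in A,k\ge1$; $X_\zeta=\{y\in\Sigma:y_0\dots y_{n-1}\in\mathcal L_\zeta\ \forall n\}$. $\zeta$ is primitive if for some $k\ge1$ each letter occurs in $\zeta^k(a)$ for every $a$. Recurrence notions for a sequence $z$ (over a finite alphabet, with the analogous metric and shift): recurrence plot $R(z,n,\varepsilon)$, $n\ge2$, is the $n\times n$ matrix ($0\le i,j<n$) with entry $1$ iff $\rho(\sigma^iz,\sigma^jz)\le\varepsilon$. A line of length $\ell$ is $(i,j,\ell)$ with $0\le i,j\le n-\ell$, $i\ne j$, entries $(i+k,j+k)=1$ for $0\le k<\ell$, entry $(i-1,j-1)=0$ if $\min\{i,j\}>0$, entry $(i+\ell,j+\ell)=0$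 if $\max\{i,j\}<n-\ell$. For finite $n$: $N_\ell$ = number of lines of length exactly $\ell$, $\lambda_\ell=N_\ell/(n^2-n)$, $\Lambda_\ell=\sum_{l\ge\ell}\lambda_l$, $\mathrm{RR}_\ell=\sum_{l\ge\ell}l\lambda_l$, $\mathrm{DET}_\ell=\mathrm{RR}_\ell/\mathrm{RR}_1$, $\mathrm{L}_\ell=\mathrm{RR}_\ell/\Lambda_\ell$ (average line length). Correlation sum $C_\ell(z,n,\varepsilon)=n^{-2}\#\{(i,j)\in[0,n)^2:\max_{0\le k<\ell}\rho(\sigma^{i+k}z,\sigma^{j+k}z)\le\varepsilon\}$. Values at $(z,\infty,\varepsilon)$ are the limits as $n\to\infty$ (for $\mathrm{L}_\ell$, the value $\infty$ means the quantity tends to $+\infty$, equivalently $\mathrm{L}_\ell=\ell+C_{\ell+1}/(C_\ell-C_{\ell+1})$ at $n=\infty$ with zero denominator). Embedding: $y^{(m)}$ is the sequence over $A^m$ with $j$-th letter $y_j\dots y_{j+m-1}$. *)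

(* Defs.v *)
From Stdlib Require Import Reals Lra Lia Arith List Classical ClassicalDescription IndefiniteDescription.
From Coquelicot Require Import Coquelicot.
Import ListNotations.
Open Scope R_scope.

(* rho(y,z) = 2^{-min{i : y_i <> z_i}} if y <> z, and 0 if y = z. *)
Definition first_diff_spec {T : Type} (y z : nat -> T) (i : nat) : Prop :=
  y i <> z i /\ forall j, (j < i)%nat -> y j = z j.

Definition rho {T : Type} (y z : nat -> T) : R :=
  match excluded_middle_informative (exists i, first_diff_spec y z i) with
  | left H => / 2 ^ (proj1_sig (constructive_indefinite_description _ H))
  | right _ => 0
  end.

Definition shift {T : Type} (i : nat) (z : nat -> T) : nat -> T := fun k => z (i + k)%nat.

Definition Rleb (a b : R) : bool := if Rle_dec a b then true else false.

Definition entry {T : Type} (z : nat -> T) (eps : R) (i j : nat) : bool :=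
  Rleb (rho (shift i z) (shift j z)) eps.

Definition is_line {T : Type} (z : nat -> T) (n : nat) (eps : R) (l i j : nat) : bool :=
  (i + l <=? n)%nat && (j + l <=? n)%nat && negb (i =? j)%nat &&
  forallb (fun k => entry z eps (i + k) (j + k)) (seq 0 l) &&
  (if (0 <? Nat.min i j)%nat then negb (entry z eps (i - 1) (j - 1)) else true) &&
  (if (Nat.max i j <? n - l)%nat then negb (entry z eps (i + l) (j + l)) else true).

Definition pairs (n : nat) : list (nat * nat) := list_prod (seq 0 n) (seq 0 n).

Definition Nlines {T : Type} (z : nat -> T) (n : nat) (eps : R) (l : nat) : nat :=
  length (filter (fun p => is_line z n eps l (fst p) (snd p)) (pairs n)).

Definition lambda {T : Type} (z : nat -> T) (n : nat) (eps : R) (l : nat) : R :=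
  INR (Nlines z n eps l) / (INR n * INR n - INR n).

(* sum over l >= ell (lines have length at most n, so l ranges in [ell, n]) *)
Definition sum_from (ell n : nat) (f : nat -> R) : R :=
  fold_right Rplus 0 (map f (seq ell (S n - ell))).

Definition Lambda {T : Type} (z : nat -> T) (n : nat) (eps : R) (ell : nat) : R :=
  sum_from ell n (lambda z n eps).

Definition RR {T : Type} (z : nat -> T) (n : nat) (eps : R) (ell : nat) : R :=
  sum_from ell n (fun l => INR l * lambda z n eps l).

Definition DET {T : Type} (z : nat -> T) (n : nat) (eps : R) (ell : nat) : R :=
  RR z n eps ell / RR z n eps 1.

Definition Lavg {T : Type} (z : nat -> T) (n : nat) (eps : R) (ell : nat) : R :=
  RR z n eps ell / Lambda z n eps ell.

Definition Csum {T : Type} (z : nat -> T) (n : nat) (eps : R) (ell : nat) : R :=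
  INR (length (filter (fun p => forallb (fun k => Rleb (rho (shift (fst p + k) z)
                                                         (shift (snd p + k) z)) eps)
                                         (seq 0 ell))
                      (pairs n))) / (INR n * INR n).

Definition embed (m : nat) (y : nat -> bool) : nat -> list bool :=
  fun j => map (fun k => y (j + k)%nat) (seq 0 m).

(* ---------- Substitutions (alphabet A = bool, 0 = false, 1 = true) ---------- *)
Definition subst_word (zeta : bool -> list bool) (w : list bool) : list bool :=
  flat_map zeta w.

Definition subst_iter (zeta : bool -> list bool) (k : nat) (a : bool) : list bool :=
  Nat.iter k (subst_word zeta) [a].

Definition uniform_subst (zeta : bool -> list bool) (q : nat) : Prop :=
  (2 <= q)%nat /\ length (zeta false) = q /\ length (zeta true) = q.

Definition subst_primitive (zeta : bool -> list bool) : Prop :=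
  exists k, (1 <= k)%nat /\ forall a b, In b (subst_iter zeta k a).

Definition subword (u w : list bool) : Prop := exists p s, w = p ++ u ++ s.

Definition in_lang (zeta : bool -> list bool) (u : list bool) : Prop :=
  exists a k, (1 <= k)%nat /\ subword u (subst_iter zeta k a).

Definition in_X (zeta : bool -> list bool) (y : nat -> bool) : Prop :=
  forall n, in_lang zeta (map y (seq 0 n)).

(* Main.v *)
Require Import Defs.
From Stdlib Require Import Reals Lra Lia Arith List Bool Classical ClassicalDescription IndefiniteDescription.
From Coquelicot Require Import Coquelicot.
Import ListNotations.
Open Scope R_scope.


Fixpoint lsum {A : Type} (s : list A) (f : A -> nat) : nat :=
  match s with [] => 0%nat | x :: t => (f x + lsum t f)%nat end.

Definition ind (b : bool) : nat := if b then 1%nat else 0%nat.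

Lemma lsum_app {A} (s t : list A) f : lsum (s ++ t) f = (lsum s f + lsum t f)%nat.
Proof. induction s; simpl; lia. Qed.

Lemma lsum_seqS f n : lsum (seq 0 (S n)) f = (lsum (seq 0 n) f + f n)%nat.
Proof. rewrite seq_S, lsum_app. simpl. lia. Qed.

Lemma lsum_le {A} (s : list A) f g : (forall x, In x s -> (f x <= g x)%nat) -> (lsum s f <= lsum s g)%nat.
Proof. induction s; simpl; intros H; [lia|]. specialize (IHs (fun x Hx => H x (or_intror Hx))). specialize (H a (or_introl eq_refl)). lia. Qed.

Lemma lsum_ext {A} (s : list A) f g : (forall x, In x s -> f x = g x) -> lsum s f = lsum s g.
Proof. induction s; simpl; intros H; [lia|]. rewrite (H a (or_introl eq_refl)), IHs; auto. Qed.

Lemma lsum_add {A} (s : list A) f g : lsum s (fun x => f x + g x)%nat = (lsum s f + lsum s g)%nat.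
Proof. induction s; simpl; lia. Qed.

Lemma lsum_const {A} (s : list A) c : lsum s (fun _ => c) = (length s * c)%nat.
Proof. induction s; simpl; lia. Qed.

Lemma lsum_mul {A} (s : list A) c f : lsum s (fun x => c * f x)%nat = (c * lsum s f)%nat.
Proof. induction s; simpl; lia. Qed.

Lemma lsum_swap {A B} (s : list A) (t : list B) F :
  lsum s (fun x => lsum t (fun y => F x y)) = lsum t (fun y => lsum s (fun x => F x y)).
Proof.
  induction s; simpl.
  - induction t; simpl; lia.
  - rewrite IHs, <- lsum_add. reflexivity.
Qed.

Lemma lsum_ge_term {A} (s : list A) f x : In x s -> (f x <= lsum s f)%nat.
Proof. induction s; simpl; intros H; [contradiction|]. destruct H; subst; [lia|]. specialize (IHs H); lia. Qed.

Lemma lsum_single {A} (s : list A) f x0 : NoDup s -> (forall x, In x s -> x <> x0 -> f x = 0%nat) ->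
  (lsum s f <= f x0)%nat.
Proof.
  induction s; simpl; intros ND H; [lia|]. inversion ND; subst.
  destruct (classic (a = x0)) as [E|E].
  - subst. assert (lsum s f = 0%nat).
    { transitivity (lsum s (fun _ => 0%nat)). apply lsum_ext. intros x Hx. apply H; auto.
      intro; subst; contradiction. rewrite lsum_const; lia. } lia.
  - rewrite (H a (or_introl eq_refl) E). simpl. apply IHs; auto.
Qed.

Lemma lsum_shift_le g n s : (lsum (seq 0 n) (fun a => g (a + s)%nat) <= lsum (seq 0 (n + s)) g)%nat.
Proof.
  induction n. simpl. lia.
  rewrite lsum_seqS. replace (S n + s)%nat with (S (n + s)) by lia. rewrite lsum_seqS. lia.
Qed.

Lemma lsum_seq_mono g m n : (m <= n)%nat -> (lsum (seq 0 m) g <= lsum (seq 0 n) g)%nat.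
Proof. induction 1. lia. rewrite lsum_seqS. lia. Qed.

Lemma lsum_shift_back g k n :
  lsum (seq 0 n) (fun a => if (k <=? a)%nat then g (a - k)%nat else 0%nat) = lsum (seq 0 (n - k)) g.
Proof.
  induction n. reflexivity.
  rewrite lsum_seqS, IHn. destruct (Nat.leb_spec k n).
  - replace (S n - k)%nat with (S (n - k)) by lia. rewrite lsum_seqS. reflexivity.
  - replace (S n - k)%nat with 0%nat by lia. replace (n - k)%nat with 0%nat by lia. simpl. lia.
Qed.

Lemma lsum_seq_ext0 g m n : (m <= n)%nat -> (forall i, (m <= i < n)%nat -> g i = 0%nat) ->
  lsum (seq 0 n) g = lsum (seq 0 m) g.
Proof.
  induction 1; intros Hz. reflexivity.
  rewrite lsum_seqS, IHle. rewrite (Hz m0); [lia| lia]. intros; apply Hz; lia.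
Qed.

Lemma lsum_shift_eq g k n : (forall i, (n <= i + k)%nat -> g i = 0%nat) ->
  lsum (seq 0 n) (fun a => if (k <=? a)%nat then g (a - k)%nat else 0%nat) = lsum (seq 0 n) g.
Proof.
  intros H. rewrite lsum_shift_back. symmetry. apply lsum_seq_ext0. lia. intros; apply H; lia.
Qed.

Lemma lsum_prod {A B} (s : list A) (t : list B) (p : A * B -> bool) :
  length (filter p (list_prod s t)) = lsum s (fun x => lsum t (fun y => ind (p (x, y)))).
Proof.
  induction s; simpl. reflexivity.
  rewrite filter_app, length_app, IHs. f_equal.
  clear. induction t; simpl. reflexivity. unfold ind at 1. destruct (p (a, a0)); simpl; lia.
Qed.

Lemma lsum_tail_count n0 ell n : (lsum (seq 0 n) (fun a => ind (n0 <? a + ell)%nat) <= n + ell - n0)%nat.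
Proof.
  induction n. simpl. lia. rewrite lsum_seqS. unfold ind at 2. destruct (Nat.ltb_spec n0 (n + ell)); lia.
Qed.

Lemma lsum_eq1 n a : (a < n)%nat -> lsum (seq 0 n) (fun b => ind (a =? b)%nat) = 1%nat.
Proof.
  intros Ha. apply Nat.le_antisymm.
  - eapply Nat.le_trans. apply (lsum_single _ _ a). apply seq_NoDup.
    intros x _ Hx. unfold ind. destruct (Nat.eqb_spec a x); congruence. unfold ind. rewrite Nat.eqb_refl. lia.
  - eapply Nat.le_trans. 2: apply (lsum_ge_term _ _ a). unfold ind; rewrite Nat.eqb_refl; lia.
    apply in_seq; lia.
Qed.

Lemma lsum_neq n : lsum (seq 0 n) (fun a => lsum (seq 0 n) (fun b => ind (negb (a =? b)%nat))) = (n * n - n)%nat.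
Proof.
  assert (E : forall a, In a (seq 0 n) -> lsum (seq 0 n) (fun b => ind (negb (a =? b)%nat)) = (n - 1)%nat).
  { intros a Ha. apply in_seq in Ha. pose proof (lsum_eq1 n a (proj2 Ha)).
    assert (lsum (seq 0 n) (fun b => ind (negb (a =? b)%nat) + ind (a =? b)%nat)%nat = n).
    { rewrite (lsum_ext _ _ (fun _ => 1%nat)). rewrite lsum_const, length_seq; lia.
      intros; unfold ind; destruct (a =? x)%nat; reflexivity. }
    rewrite lsum_add in H0. lia. }
  rewrite (lsum_ext _ _ _ E), lsum_const, length_seq. destruct n; simpl; [lia|]. nia.
Qed.
Section Lines.
Context {T : Type} (z : nat -> T) (n : nat) (eps : R).

Lemma line_facts l i j : is_line z n eps l i j = true ->
  (i + l <= n)%nat /\ (j + l <= n)%nat /\ i <> j /\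
  (forall t, (t < l)%nat -> entry z eps (i + t) (j + t) = true) /\
  ((0 < i)%nat -> (0 < j)%nat -> entry z eps (i - 1) (j - 1) = false) /\
  ((i + l < n)%nat -> (j + l < n)%nat -> entry z eps (i + l) (j + l) = false).
Proof.
  unfold is_line. intros H.
  repeat match type of H with (_ && _ = true) => apply andb_true_iff in H; destruct H as [H ?H] end.
  apply Nat.leb_le in H. apply Nat.leb_le in H4. apply negb_true_iff, Nat.eqb_neq in H3.
  rewrite forallb_forall in H2. repeat split; auto.
  - intros t Ht. apply H2. apply in_seq; lia.
  - intros. destruct (Nat.ltb_spec 0 (Nat.min i j)); [|lia]. apply negb_true_iff; auto.
  - intros. destruct (Nat.ltb_spec (Nat.max i j) (n - l)); [|lia]. apply negb_true_iff; auto.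
Qed.

Lemma line_make l i j :
  (i + l <= n)%nat -> (j + l <= n)%nat -> i <> j ->
  (forall t, (t < l)%nat -> entry z eps (i + t) (j + t) = true) ->
  ((0 < i)%nat -> (0 < j)%nat -> entry z eps (i - 1) (j - 1) = false) ->
  ((i + l < n)%nat -> (j + l < n)%nat -> entry z eps (i + l) (j + l) = false) ->
  is_line z n eps l i j = true.
Proof.
  intros H1 H2 H3 H4 H5 H6. unfold is_line.
  repeat (apply andb_true_iff; split).
  - apply Nat.leb_le; auto.
  - apply Nat.leb_le; auto.
  - apply negb_true_iff, Nat.eqb_neq; auto.
  - apply forallb_forall. intros t Ht. apply in_seq in Ht. apply H4; lia.
  - destruct (Nat.ltb_spec 0 (Nat.min i j)); auto. apply negb_true_iff, H5; lia.
  - destruct (Nat.ltb_spec (Nat.max i j) (n - l)); auto. apply negb_true_iff, H6; lia.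
Qed.

Lemma line_uniq l i j l' i' j' k k' :
  is_line z n eps l i j = true -> is_line z n eps l' i' j' = true ->
  (k < l)%nat -> (k' < l')%nat -> (i + k = i' + k')%nat -> (j + k = j' + k')%nat ->
  l = l' /\ k = k'.
Proof.
  intros L1 L2 Hk Hk' E1 E2.
  destruct (line_facts _ _ _ L1) as (A1 & B1 & C1 & D1 & F1 & G1).
  destruct (line_facts _ _ _ L2) as (A2 & B2 & C2 & D2 & F2 & G2).
  assert (k = k').
  { destruct (Nat.lt_total k k') as [H|[H|H]]; auto.
    -
      exfalso. specialize (F1 ltac:(lia) ltac:(lia)).
      specialize (D2 (k' - k - 1)%nat ltac:(lia)).
      replace (i' + (k' - k - 1))%nat with (i - 1)%nat in D2 by lia.
      replace (j' + (k' - k - 1))%nat with (j - 1)%nat in D2 by lia. congruence.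
    - exfalso. specialize (F2 ltac:(lia) ltac:(lia)).
      specialize (D1 (k - k' - 1)%nat ltac:(lia)).
      replace (i + (k - k' - 1))%nat with (i' - 1)%nat in D1 by lia.
      replace (j + (k - k' - 1))%nat with (j' - 1)%nat in D1 by lia. congruence. }
  subst k'. assert (i = i') by lia. assert (j = j') by lia. subst i' j'. split; auto.
  destruct (Nat.lt_total l l') as [H|[H|H]]; auto; exfalso.
  - specialize (G1 ltac:(lia) ltac:(lia)). rewrite D2 in G1 by lia. discriminate.
  - specialize (G2 ltac:(lia) ltac:(lia)). rewrite D1 in G2 by lia. discriminate.
Qed.

Fixpoint back (a b fuel : nat) : nat :=
  match fuel with
  | O => O
  | S f => if (0 <? a)%nat && (0 <? b)%nat && entry z eps (a - 1) (b - 1)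
           then S (back (a - 1) (b - 1) f) else O
  end.

Lemma back_spec fuel : forall a b, (a <= fuel)%nat ->
  (back a b fuel <= a)%nat /\ (back a b fuel <= b)%nat /\
  (forall t, (1 <= t <= back a b fuel)%nat -> entry z eps (a - t) (b - t) = true) /\
  ((0 < a - back a b fuel)%nat -> (0 < b - back a b fuel)%nat ->
     entry z eps (a - back a b fuel - 1) (b - back a b fuel - 1) = false).
Proof.
  induction fuel; intros a b Ha; simpl.
  - repeat split; intros; lia.
  - destruct (Nat.ltb_spec 0 a); destruct (Nat.ltb_spec 0 b); simpl;
      [| repeat split; intros; lia ..].
    destruct (entry z eps (a - 1) (b - 1)) eqn:Ee.
    + destruct (IHfuel (a - 1)%nat (b - 1)%nat ltac:(lia)) as (P1 & P2 & P3 & P4).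
      repeat split; try lia.
      * intros t Ht. destruct (Nat.eq_dec t 1). subst; auto.
        specialize (P3 (t - 1)%nat ltac:(lia)).
        replace (a - 1 - (t - 1))%nat with (a - t)%nat in P3 by lia.
        replace (b - 1 - (t - 1))%nat with (b - t)%nat in P3 by lia. auto.
      * intros. replace (a - S (back (a - 1) (b - 1) fuel) - 1)%nat with (a - 1 - back (a - 1) (b - 1) fuel - 1)%nat by lia.
        replace (b - S (back (a - 1) (b - 1) fuel) - 1)%nat with (b - 1 - back (a - 1) (b - 1) fuel - 1)%nat by lia.
        apply P4; lia.
    + repeat split; intros; try lia. rewrite !Nat.sub_0_r. auto.
Qed.

Fixpoint fwd (a b fuel : nat) : nat :=
  match fuel with
  | O => O
  | S f => if (a <? n)%nat && (b <? n)%nat && entry z eps a b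
           then S (fwd (S a) (S b) f) else O
  end.

Lemma fwd_spec fuel : forall a b, (n <= a + fuel)%nat -> (a <= n)%nat -> (b <= n)%nat ->
  (a + fwd a b fuel <= n)%nat /\ (b + fwd a b fuel <= n)%nat /\
  (forall t, (t < fwd a b fuel)%nat -> entry z eps (a + t) (b + t) = true) /\
  ((a + fwd a b fuel < n)%nat -> (b + fwd a b fuel < n)%nat ->
     entry z eps (a + fwd a b fuel) (b + fwd a b fuel) = false) /\
  (forall t0, (a + t0 <= n)%nat -> (b + t0 <= n)%nat ->
     (forall t, (t < t0)%nat -> entry z eps (a + t) (b + t) = true) -> (t0 <= fwd a b fuel)%nat).
Proof.
  induction fuel; intros a b Ha Ha' Hb'; simpl.
  - repeat split; intros; try lia.
  - destruct (Nat.ltb_spec a n); destruct (Nat.ltb_spec b n); simpl;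
      [| repeat split; intros; lia ..].
    destruct (entry z eps a b) eqn:Ee.
    + destruct (IHfuel (S a) (S b) ltac:(lia) ltac:(lia) ltac:(lia)) as (P1 & P2 & P3 & P4 & P5).
      repeat split; try lia.
      * intros t Ht. destruct t. rewrite !Nat.add_0_r; auto.
        specialize (P3 t ltac:(lia)). replace (a + S t)%nat with (S a + t)%nat by lia.
        replace (b + S t)%nat with (S b + t)%nat by lia. auto.
      * intros. replace (a + S (fwd (S a) (S b) fuel))%nat with (S a + fwd (S a) (S b) fuel)%nat by lia.
        replace (b + S (fwd (S a) (S b) fuel))%nat with (S b + fwd (S a) (S b) fuel)%nat by lia.
        apply P4; lia.
      * intros t0 H1 H2 H3. destruct t0. lia.
        assert (t0 <= fwd (S a) (S b) fuel)%nat; [|lia]. apply P5; try lia.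
        intros t Ht. specialize (H3 (S t) ltac:(lia)).
        replace (a + S t)%nat with (S a + t)%nat in H3 by lia.
        replace (b + S t)%nat with (S b + t)%nat in H3 by lia. auto.
    + repeat split; intros; try lia. rewrite !Nat.add_0_r. auto.
      lazymatch goal with |- (?t0 <= _)%nat => destruct t0; [lia|] end.
      match goal with H : forall t, (t < S _)%nat -> _ |- _ => specialize (H 0%nat ltac:(lia)); rewrite !Nat.add_0_r in H; congruence end.
Qed.

Lemma line_exists a b ell : (1 <= ell)%nat -> a <> b -> (a + ell <= n)%nat -> (b + ell <= n)%nat ->
  (forall t, (t < ell)%nat -> entry z eps (a + t) (b + t) = true) ->
  exists l k, (k < l)%nat /\ (k <= a)%nat /\ (k <= b)%nat /\ (ell <= l <= n)%nat /\
    is_line z n eps l (a - k) (b - k) = true.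
Proof.
  intros Hell Hab Ha Hb He.
  destruct (back_spec a a b (le_n a)) as (P1 & P2 & P3 & P4).
  destruct (fwd_spec n a b ltac:(lia) ltac:(lia) ltac:(lia)) as (Q1 & Q2 & Q3 & Q4 & Q5).
  set (k := back a b a) in *. set (f := fwd a b n) in *.
  assert (ell <= f)%nat by (apply Q5; auto; lia).
  exists (k + f)%nat, k. repeat split; try lia.
  apply line_make; try lia.
  - intros t Ht. destruct (Nat.lt_ge_cases t k).
    + specialize (P3 (k - t)%nat ltac:(lia)).
      replace (a - k + t)%nat with (a - (k - t))%nat by lia.
      replace (b - k + t)%nat with (b - (k - t))%nat by lia. auto.
    + specialize (Q3 (t - k)%nat ltac:(lia)).
      replace (a - k + t)%nat with (a + (t - k))%nat by lia.
      replace (b - k + t)%nat with (b + (t - k))%nat by lia. auto.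
  - intros. apply P4; lia.
  - intros. replace (a - k + (k + f))%nat with (a + f)%nat by lia.
    replace (b - k + (k + f))%nat with (b + f)%nat by lia. apply Q4; lia.
Qed.

End Lines.

Lemma ind_le1 b : (ind b <= 1)%nat. Proof. destruct b; simpl; lia. Qed.

Lemma lsum_ltb n l : lsum (seq 0 n) (fun k => ind (k <? l)%nat) = Nat.min n l.
Proof. induction n. reflexivity. rewrite lsum_seqS, IHn. unfold ind. destruct (Nat.ltb_spec n l); lia. Qed.

Section Count.
Context {T : Type} (z : nat -> T) (eps : R) (ell : nat) (good : nat -> bool).
Hypothesis Hell : (1 <= ell)%nat.
Hypothesis Hgood : forall i j t, good i = true -> good j = true -> (t < ell)%nat ->
  entry z eps (i + t) (j + t) = true.

Definition Qp (n a : nat) : bool := good a && (a + ell <=? n)%nat.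
Definition Bc (n : nat) : nat := lsum (seq 0 n) (fun a => ind (negb (Qp n a))).
Definition bad (n : nat) : nat := lsum (seq 0 n) (fun a => ind (negb (good a))).

Lemma Bc_bad n : (Bc n <= bad n + ell)%nat.
Proof.
  unfold Bc, bad. pose proof (lsum_tail_count n ell n).
  assert (lsum (seq 0 n) (fun a => ind (negb (Qp n a))) <=
     lsum (seq 0 n) (fun a => ind (negb (good a)) + ind (n <? a + ell)%nat))%nat.
  { apply lsum_le. intros a _. unfold Qp, ind.
    destruct (good a); simpl; [| destruct (n <? a + ell)%nat; lia].
    destruct (Nat.leb_spec (a + ell) n); destruct (Nat.ltb_spec n (a + ell)); simpl; lia. }
  rewrite lsum_add in H0. lia.
Qed.

Lemma Nlines_eq n l : Nlines z n eps l =
  lsum (seq 0 n) (fun i => lsum (seq 0 n) (fun j => ind (is_line z n eps l i j))).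
Proof. unfold Nlines, pairs. rewrite lsum_prod. reflexivity. Qed.

Definition Pt n a b l k : bool :=
  (k <? l)%nat && (k <=? a)%nat && (k <=? b)%nat && is_line z n eps l (a - k) (b - k).

Lemma shift2 n l k : lsum (seq 0 n) (fun i => lsum (seq 0 n) (fun j => ind ((k <? l)%nat && is_line z n eps l i j)))
  = lsum (seq 0 n) (fun a => lsum (seq 0 n) (fun b => ind (Pt n a b l k))).
Proof.
  set (h := fun i j => ind ((k <? l)%nat && is_line z n eps l i j)).
  assert (Hz : forall i j, (n <= i + k \/ n <= j + k)%nat -> h i j = 0%nat).
  { intros i j Hij. unfold h. destruct (Nat.ltb_spec k l); simpl; auto.
    destruct (is_line z n eps l i j) eqn:E; auto. apply line_facts in E. lia. }
  transitivity (lsum (seq 0 n) (fun i => lsum (seq 0 n) (fun b => if (k <=? b)%nat then h i (b - k)%nat else 0%nat))).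
  { apply lsum_ext. intros i _. symmetry. apply lsum_shift_eq. intros; apply Hz; lia. }
  rewrite <- (lsum_shift_eq (fun i => lsum (seq 0 n) (fun b => if (k <=? b)%nat then h i (b - k)%nat else 0%nat)) k n).
  - apply lsum_ext. intros a _. unfold Pt, h. destruct (Nat.leb_spec k a).
    + apply lsum_ext. intros b _. destruct (Nat.leb_spec k b), (k <? l)%nat; simpl; reflexivity.
    + symmetry. rewrite (lsum_ext _ _ (fun _ => 0%nat)). rewrite lsum_const; lia.
      intros b _. destruct (k <? l)%nat; reflexivity.
  - intros i Hi. rewrite (lsum_ext _ _ (fun _ => 0%nat)). rewrite lsum_const; lia.
    intros b _. destruct (k <=? b)%nat; auto.
Qed.

Definition RRnum n ell' := lsum (seq ell' (S n - ell')) (fun l => l * Nlines z n eps l)%nat.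
Definition LNum n := lsum (seq ell (S n - ell)) (fun l => Nlines z n eps l).

Lemma RRnum_eq n ell' : RRnum n ell' = lsum (seq 0 n) (fun a => lsum (seq 0 n) (fun b =>
   lsum (seq ell' (S n - ell')) (fun l => lsum (seq 0 n) (fun k => ind (Pt n a b l k))))).
Proof.
  unfold RRnum.
  transitivity (lsum (seq ell' (S n - ell')) (fun l => lsum (seq 0 n) (fun k =>
     lsum (seq 0 n) (fun a => lsum (seq 0 n) (fun b => ind (Pt n a b l k)))))).
  - apply lsum_ext. intros l Hl. apply in_seq in Hl.
    transitivity (lsum (seq 0 n) (fun k => ind (k <? l)%nat * Nlines z n eps l))%nat.
    { rewrite (lsum_ext _ _ (fun k => Nlines z n eps l * ind (k <? l)%nat))%nat.
      rewrite lsum_mul, lsum_ltb. rewrite Nat.min_r by lia. lia. intros; lia. }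
    apply lsum_ext. intros k _. rewrite <- shift2, Nlines_eq, <- lsum_mul.
    apply lsum_ext. intros i _. rewrite <- lsum_mul. apply lsum_ext. intros j _.
    unfold ind. destruct (k <? l)%nat, (is_line z n eps l i j); reflexivity.
  - rewrite (lsum_ext _ _ (fun l => lsum (seq 0 n) (fun a => lsum (seq 0 n) (fun k => lsum (seq 0 n) (fun b => ind (Pt n a b l k)))))).
    2: { intros; apply lsum_swap. }
    rewrite lsum_swap. apply lsum_ext. intros a _.
    rewrite (lsum_ext _ _ (fun l => lsum (seq 0 n) (fun b => lsum (seq 0 n) (fun k => ind (Pt n a b l k))))).
    2: { intros; apply lsum_swap. }
    rewrite lsum_swap. reflexivity.
Qed.

Lemma inner_upper n a b ell' :
  (lsum (seq ell' (S n - ell')) (fun l => lsum (seq 0 n) (fun k => ind (Pt n a b l k))) <= ind (negb (a =? b)%nat))%nat.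
Proof.
  destruct (classic (exists l0 k0, Pt n a b l0 k0 = true)) as [[l0 [k0 H0]]|HN].
  - assert (U : forall l k, Pt n a b l k = true -> l = l0 /\ k = k0).
    { intros l k H. unfold Pt in H, H0.
      rewrite !andb_true_iff, Nat.ltb_lt, !Nat.leb_le in H, H0.
      destruct H as [[[A1 A2] A3] A4]. destruct H0 as [[[B1 B2] B3] B4].
      eapply line_uniq; eauto; lia. }
    assert (a <> b).
    { unfold Pt in H0. apply andb_true_iff in H0. destruct H0 as [_ H0].
      apply line_facts in H0. lia. }
    replace (ind (negb (a =? b)%nat)) with 1%nat by (unfold ind; destruct (Nat.eqb_spec a b); auto; lia).
    eapply Nat.le_trans. apply (lsum_single _ _ l0). apply seq_NoDup.
    { intros l _ Hl. rewrite (lsum_ext _ _ (fun _ => 0%nat)). rewrite lsum_const; lia.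
      intros k _. destruct (Pt n a b l k) eqn:E; auto. apply U in E. tauto. }
    eapply Nat.le_trans. apply (lsum_single _ _ k0). apply seq_NoDup.
    { intros k _ Hk. destruct (Pt n a b l0 k) eqn:E; auto. apply U in E. tauto. }
    apply ind_le1.
  - rewrite (lsum_ext _ _ (fun _ => 0%nat)). rewrite lsum_const; lia.
    intros l _. rewrite (lsum_ext _ _ (fun _ => 0%nat)). rewrite lsum_const; lia.
    intros k _. destruct (Pt n a b l k) eqn:E; auto. exfalso; eauto.
Qed.

Lemma inner_lower n a b ell' : (1 <= ell')%nat -> (ell' <= ell)%nat ->
  (ind (Qp n a && Qp n b && negb (a =? b)%nat) <=
   lsum (seq ell' (S n - ell')) (fun l => lsum (seq 0 n) (fun k => ind (Pt n a b l k))))%nat.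
Proof.
  intros H1 H2. unfold Qp, ind at 1.
  destruct (good a) eqn:Ga, (good b) eqn:Gb, (Nat.leb_spec (a + ell) n), (Nat.leb_spec (b + ell) n),
    (Nat.eqb_spec a b); cbn [andb negb ind]; try lia.
  destruct (line_exists z n eps a b ell' H1 n0 ltac:(lia) ltac:(lia)) as (l & k & P1 & P2 & P3 & P4 & P5).
  { intros t Ht. apply Hgood; auto. lia. }
  eapply Nat.le_trans. 2: apply (lsum_ge_term _ _ l). 2: { rewrite in_seq. lia. }
  eapply Nat.le_trans. 2: apply (lsum_ge_term _ _ k). 2: { rewrite in_seq. lia. }
  unfold Pt. rewrite P5. destruct (Nat.ltb_spec k l), (Nat.leb_spec k a), (Nat.leb_spec k b); simpl; lia.
Qed.

Lemma RRnum_upper n ell' : (RRnum n ell' <= n * n - n)%nat.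
Proof.
  rewrite RRnum_eq, <- lsum_neq. apply lsum_le. intros a _. apply lsum_le. intros b _. apply inner_upper.
Qed.

Lemma RRnum_lower n ell' : (1 <= ell')%nat -> (ell' <= ell)%nat ->
  (n * n - n <= RRnum n ell' + 2 * n * Bc n)%nat.
Proof.
  intros H1 H2. rewrite <- lsum_neq.
  assert (lsum (seq 0 n) (fun a => lsum (seq 0 n) (fun b => ind (Qp n a && Qp n b && negb (a =? b)%nat))) <= RRnum n ell')%nat.
  { rewrite RRnum_eq. apply lsum_le. intros a _. apply lsum_le. intros b _. apply inner_lower; auto. }
  assert (E : (lsum (seq 0 n) (fun a => lsum (seq 0 n) (fun b => ind (negb (a =? b)%nat))) <=
    lsum (seq 0 n) (fun a => lsum (seq 0 n) (fun b => ind (Qp n a && Qp n b && negb (a =? b)%nat)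
        + ind (negb (Qp n a)) + ind (negb (Qp n b)))))%nat).
  { apply lsum_le. intros a _. apply lsum_le. intros b _. unfold ind.
    destruct (Qp n a), (Qp n b), (a =? b)%nat; simpl; lia. }
  rewrite (lsum_ext _ (fun a => lsum (seq 0 n) (fun b => _ + _ + _)%nat)
     (fun a => lsum (seq 0 n) (fun b => ind (Qp n a && Qp n b && negb (a =? b)%nat)) + n * ind (negb (Qp n a)) + Bc n)%nat) in E.
  2: { intros a _. rewrite !lsum_add, lsum_const, length_seq. reflexivity. }
  rewrite !lsum_add, lsum_mul, lsum_const, length_seq in E. fold (Bc n) in E. lia.
Qed.

Lemma RR_le_nL n : (RRnum n ell <= n * LNum n)%nat.
Proof.
  unfold RRnum, LNum. rewrite <- lsum_mul. apply lsum_le. intros l Hl. apply in_seq in Hl. nia.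
Qed.

Definition start i j : bool := (i =? 0)%nat || (j =? 0)%nat || negb (entry z eps (i - 1) (j - 1)).

Lemma LNum_upper n : (LNum n <= 2 * n + 2 * n * Bc n)%nat.
Proof.
  unfold LNum.
  rewrite (lsum_ext _ _ (fun l => lsum (seq 0 n) (fun i => lsum (seq 0 n) (fun j => ind (is_line z n eps l i j))))).
  2: intros; apply Nlines_eq.
  rewrite lsum_swap. rewrite (lsum_ext _ _ (fun i => lsum (seq 0 n) (fun j => lsum (seq ell (S n - ell)) (fun l => ind (is_line z n eps l i j))))).
  2: intros; apply lsum_swap.
  assert (S1 : forall i j, (lsum (seq ell (S n - ell)) (fun l => ind (is_line z n eps l i j)) <= ind (start i j))%nat).
  { intros i j. destruct (classic (exists l0, In l0 (seq ell (S n - ell)) /\ is_line z n eps l0 i j = true)) as [[l0 [Hl0 H0]]|HN].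
    - assert (start i j = true).
      { unfold start. apply line_facts in H0. destruct H0 as (_&_&_&_&F&_).
        destruct (Nat.eqb_spec i 0), (Nat.eqb_spec j 0); simpl; auto. rewrite F; auto; lia. }
      rewrite H. eapply Nat.le_trans. apply (lsum_single _ _ l0). apply seq_NoDup.
      { intros l Hl1 Hl. destruct (is_line z n eps l i j) eqn:E; auto. exfalso. apply Hl.
        rewrite in_seq in Hl1, Hl0.
        destruct (line_uniq z n eps l i j l0 i j 0 0) as [? _]; auto; try lia. }
      apply ind_le1.
    - rewrite (lsum_ext _ _ (fun _ => 0%nat)). rewrite lsum_const; lia.
      intros l Hl. destruct (is_line z n eps l i j) eqn:E; auto. exfalso; eauto. }
  assert (S2 : forall i j, (ind (start i j) <= ind (i =? 0)%nat + ind (j =? 0)%nat +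
       (if (1 <=? i)%nat then ind (negb (Qp n (i - 1))) else 0) + (if (1 <=? j)%nat then ind (negb (Qp n (j - 1))) else 0))%nat).
  { intros i j. unfold start.
    destruct (Nat.eqb_spec i 0), (Nat.eqb_spec j 0); cbn [orb]; try (unfold ind at 1 2 3; lia).
    destruct (Nat.leb_spec 1 i), (Nat.leb_spec 1 j); try lia.
    destruct (Qp n (i - 1)) eqn:Qi, (Qp n (j - 1)) eqn:Qj; cbn [negb ind]; try lia.
    - unfold Qp in Qi, Qj. apply andb_true_iff in Qi, Qj.
      pose proof (Hgood (i - 1) (j - 1) 0 (proj1 Qi) (proj1 Qj) ltac:(lia)) as HH. rewrite !Nat.add_0_r in HH.
      rewrite HH. cbn. lia.
    - pose proof (ind_le1 (negb (entry z eps (i - 1) (j - 1)))). lia.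
    - pose proof (ind_le1 (negb (entry z eps (i - 1) (j - 1)))). lia.
    - pose proof (ind_le1 (negb (entry z eps (i - 1) (j - 1)))). lia. }
  assert (Z1 : (lsum (seq 0 n) (fun i => ind (i =? 0)%nat) <= 1)%nat).
  { eapply Nat.le_trans. apply (lsum_single _ _ 0%nat). apply seq_NoDup.
    intros i _ Hi. unfold ind. destruct (Nat.eqb_spec i 0); auto; congruence. apply ind_le1. }
  assert (Z2 : (lsum (seq 0 n) (fun i => if (1 <=? i)%nat then ind (negb (Qp n (i - 1))) else 0%nat) <= Bc n)%nat).
  { rewrite (lsum_shift_back (fun a => ind (negb (Qp n a))) 1 n). apply lsum_seq_mono. lia. }
  eapply Nat.le_trans. apply lsum_le. intros i _. apply lsum_le. intros j _.
  eapply Nat.le_trans. apply S1. apply S2.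
  rewrite (lsum_ext _ _ (fun i => n * ind (i =? 0)%nat + lsum (seq 0 n) (fun j => ind (j =? 0)%nat) +
      n * (if (1 <=? i)%nat then ind (negb (Qp n (i - 1))) else 0%nat) +
      lsum (seq 0 n) (fun j => if (1 <=? j)%nat then ind (negb (Qp n (j - 1))) else 0%nat))%nat).
  2: { intros i _. rewrite !lsum_add, !lsum_const, !length_seq. lia. }
  rewrite !lsum_add, !lsum_const, !lsum_mul, !length_seq. nia.
Qed.

Definition Cnum n := length (filter (fun p => forallb (fun k => Rleb (rho (shift (fst p + k) z)
                                                         (shift (snd p + k) z)) eps) (seq 0 ell)) (pairs n)).

Lemma Cnum_bounds n : (Cnum n <= n * n)%nat /\ (n * n <= Cnum n + 2 * n * Bc n)%nat.
Proof.
  unfold Cnum, pairs. rewrite lsum_prod. split.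
  - eapply Nat.le_trans. apply lsum_le. intros i _. apply lsum_le. intros j _. apply ind_le1.
    rewrite !lsum_const, length_seq. lia.
  - assert (E : (n * n <= lsum (seq 0 n) (fun a => lsum (seq 0 n) (fun b => ind (Qp n a && Qp n b)
        + ind (negb (Qp n a)) + ind (negb (Qp n b))))%nat)%nat).
    { assert (E0 : (n * n = lsum (seq 0 n) (fun a => lsum (seq 0 n) (fun b => 1)))%nat)
        by (rewrite !lsum_const, length_seq; lia).
      rewrite E0. apply lsum_le; intros a _; apply lsum_le; intros b _.
      unfold ind; destruct (Qp n a), (Qp n b); simpl; lia. }
    assert (F : (lsum (seq 0 n) (fun a => lsum (seq 0 n) (fun b => ind (Qp n a && Qp n b))) <=
       lsum (seq 0 n) (fun x => lsum (seq 0 n) (fun y => ind (forallb (fun k => Rleb (rho (shift (fst (x, y) + k) z)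
                                                         (shift (snd (x, y) + k) z)) eps) (seq 0 ell)))))%nat).
    { apply lsum_le; intros a _; apply lsum_le; intros b _. unfold ind.
      destruct (Qp n a && Qp n b) eqn:E1; [|destruct (forallb _ _); lia].
      unfold Qp in E1. rewrite !andb_true_iff in E1. destruct E1 as [[Ga _] [Gb _]].
      replace (forallb _ _) with true. lia. symmetry. apply forallb_forall.
      intros t Ht. apply in_seq in Ht. exact (Hgood a b t Ga Gb ltac:(lia)). }
    rewrite (lsum_ext _ (fun a => lsum (seq 0 n) (fun b => _ + _ + _)%nat)
     (fun a => lsum (seq 0 n) (fun b => ind (Qp n a && Qp n b)) + n * ind (negb (Qp n a)) + Bc n)%nat) in E.
    2: { intros a _. rewrite !lsum_add, lsum_const, length_seq. reflexivity. }
    rewrite !lsum_add, lsum_mul, lsum_const, length_seq in E. fold (Bc n) in E. lia.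
Qed.

End Count.


Lemma fr_mul (s : list nat) (c h : nat -> nat) D :
  fold_right Rplus 0 (map (fun l => INR (c l) * (INR (h l) / D)) s) = INR (lsum s (fun l => c l * h l)%nat) / D.
Proof. induction s; simpl. unfold Rdiv; ring. rewrite IHs, plus_INR, mult_INR. unfold Rdiv; ring. Qed.

Lemma fr_one (s : list nat) (h : nat -> nat) D :
  fold_right Rplus 0 (map (fun l => INR (h l) / D) s) = INR (lsum s h) / D.
Proof. induction s; simpl. unfold Rdiv; ring. rewrite IHs, plus_INR. unfold Rdiv; ring. Qed.

Lemma RR_eq {T} (z : nat -> T) eps n ell' :
  RR z n eps ell' = INR (RRnum z eps n ell') / (INR n * INR n - INR n).
Proof. unfold RR, sum_from, lambda, RRnum. apply (fr_mul _ (fun l => l) (fun l => Nlines z n eps l)). Qed.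

Lemma Lambda_eq {T} (z : nat -> T) eps n ell :
  Lambda z n eps ell = INR (LNum z eps ell n) / (INR n * INR n - INR n).
Proof. unfold Lambda, sum_from, lambda, LNum. apply (fr_one _ (fun l => Nlines z n eps l)). Qed.

Lemma Csum_eq {T} (z : nat -> T) eps n ell :
  Csum z n eps ell = INR (Cnum z eps ell n) / (INR n * INR n).
Proof. reflexivity. Qed.

Lemma lim1 (u : nat -> R) : (forall d, 0 < d -> exists N, forall n, (N <= n)%nat -> Rabs (u n - 1) <= d) ->
  is_lim_seq u 1.
Proof.
  intros H. apply is_lim_seq_spec. intros e. destruct (H (e / 2)) as [N HN].
  destruct e; simpl; lra. exists N. intros n Hn. specialize (HN n Hn). destruct e; simpl in *; lra.
Qed.

Lemma archN (x : R) : exists N, forall n, (N <= n)%nat -> x <= INR n.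
Proof.
  destruct (INR_archimed 1 x ltac:(lra)) as [N HN]. exists N. intros n Hn.
  apply le_INR in Hn. lra.
Qed.

Lemma ev_and (P Q : nat -> Prop) : (exists N, forall n, (N <= n)%nat -> P n) ->
  (exists N, forall n, (N <= n)%nat -> Q n) -> exists N, forall n, (N <= n)%nat -> P n /\ Q n.
Proof. intros [N1 H1] [N2 H2]. exists (N1 + N2)%nat. intros; split; [apply H1|apply H2]; lia. Qed.

Section Core.
Context {T : Type} (z : nat -> T) (eps : R) (ell : nat) (good : nat -> bool).
Hypothesis Hell : (1 <= ell)%nat.
Hypothesis Hgood : forall i j t, good i = true -> good j = true -> (t < ell)%nat ->
  entry z eps (i + t) (j + t) = true.
Hypothesis Hdens : forall d, 0 < d -> exists N, forall n, (N <= n)%nat -> INR (bad good n) <= d * INR n.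

Lemma Bdens d : 0 < d -> exists N, forall n, (N <= n)%nat -> INR (Bc ell good n) <= d * INR n.
Proof.
  intros Hd. destruct (ev_and _ _ (Hdens (d / 2) ltac:(lra)) (archN (2 * INR ell / d))) as [N HN].
  exists N. intros n Hn. destruct (HN n Hn) as [H1 H2].
  pose proof (Bc_bad ell good Hell n) as HB. apply le_INR in HB. rewrite plus_INR in HB.
  assert (INR ell <= d / 2 * INR n).
  { apply (Rmult_le_compat_l (d / 2)) in H2; [|lra]. replace (d / 2 * (2 * INR ell / d)) with (INR ell) in H2 by (field; lra). lra. }
  lra.
Qed.

Lemma bounds n : (2 <= n)%nat ->
  let N := INR n in let b := INR (Bc ell good n) in let D := N * N - N in
  0 < D /\ D = N * (N - 1) /\
  (forall ell', (1 <= ell')%nat -> (ell' <= ell)%nat ->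
    INR (RRnum z eps n ell') <= D /\ D <= INR (RRnum z eps n ell') + 2 * N * b) /\
  INR (RRnum z eps n ell) <= N * INR (LNum z eps ell n) /\
  INR (LNum z eps ell n) <= 2 * N + 2 * N * b /\
  INR (Cnum z eps ell n) <= N * N /\ N * N <= INR (Cnum z eps ell n) + 2 * N * b.
Proof.
  intros Hn N b D.
  assert (HN : 2 <= N) by (unfold N; apply (le_INR 2) in Hn; simpl in Hn; lra).
  assert (ED : D = INR (n * n - n)).
  { unfold D, N. rewrite minus_INR by nia. rewrite mult_INR. ring. }
  split. unfold D; nra. split. unfold D; ring.
  split.
  { intros ell' H1 H2. pose proof (RRnum_upper z eps ell Hell n ell'). pose proof (RRnum_lower z eps ell good Hell Hgood n ell' H1 H2).
    apply le_INR in H, H0. rewrite <- ED in H, H0. rewrite plus_INR, !mult_INR in H0. simpl in H0. fold N b in H0.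
    split; lra. }
  split.
  { pose proof (RR_le_nL z eps ell Hell n). apply le_INR in H. rewrite mult_INR in H. exact H. }
  split.
  { pose proof (LNum_upper z eps ell good Hell Hgood n). apply le_INR in H. rewrite plus_INR, !mult_INR in H. simpl in H. fold N b in H. lra. }
  pose proof (Cnum_bounds z eps ell good Hell Hgood n) as [H1 H2]. apply le_INR in H1, H2.
  rewrite mult_INR in H1. rewrite plus_INR, !mult_INR in H2. simpl in H2. fold N b in H1, H2. split; lra.
Qed.

Lemma ev_bounds d : 0 < d -> exists N0, forall n, (N0 <= n)%nat ->
  (2 <= n)%nat /\ INR (Bc ell good n) <= d * INR n.
Proof.
  intros Hd. destruct (Bdens d Hd) as [N HN]. exists (N + 2)%nat. intros n Hn. split. lia. apply HN; lia.
Qed.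

Lemma RR_close ell' d : (1 <= ell')%nat -> (ell' <= ell)%nat -> 0 < d -> exists N0, forall n, (N0 <= n)%nat ->
  1 - d <= RR z n eps ell' <= 1.
Proof.
  intros H1 H2 Hd. destruct (ev_bounds (d / 4) ltac:(lra)) as [N0 HN]. exists N0. intros n Hn.
  destruct (HN n Hn) as [Hn2 Hb]. destruct (bounds n Hn2) as (P0 & P1 & P2 & _).
  destruct (P2 ell' H1 H2) as [Q1 Q2]. rewrite RR_eq.
  set (N := INR n) in *. set (b := INR (Bc ell good n)) in *. set (r := INR (RRnum z eps n ell')) in *.
  set (D := N * N - N) in *.
  assert (HN2 : 2 <= N) by (unfold N; apply (le_INR 2) in Hn2; simpl in Hn2; lra).
  split.
  - apply (Rmult_le_reg_r D); auto. unfold Rdiv. rewrite Rmult_assoc, Rinv_l, Rmult_1_r by lra.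
    assert (2 * N * b <= d * D).
    { rewrite P1. assert (N <= 2 * (N - 1)) by lra.
      assert (2 * N * b <= 2 * N * (d / 4 * N)) by (apply Rmult_le_compat_l; lra).
      assert (2 * N * (d / 4 * N) <= d * (N * (N - 1))).
      { replace (2 * N * (d / 4 * N)) with (d / 2 * N * N) by field.
        replace (d * (N * (N - 1))) with (d / 2 * N * (2 * (N - 1))) by field.
        apply Rmult_le_compat_l; [|lra]. apply Rmult_le_pos; lra. }
      lra. }
    nra.
  - apply (Rmult_le_reg_r D); auto. unfold Rdiv. rewrite Rmult_assoc, Rinv_l, Rmult_1_r by lra. lra.
Qed.

Lemma Csum_lim : is_lim_seq (fun n => Csum z n eps ell) 1.
Proof.
  apply lim1. intros d Hd. destruct (ev_bounds (d / 2) ltac:(lra)) as [N0 HN]. exists N0. intros n Hn.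
  destruct (HN n Hn) as [Hn2 Hb]. destruct (bounds n Hn2) as (_ & _ & _ & _ & _ & Q1 & Q2).
  rewrite Csum_eq.
  set (N := INR n) in *. set (b := INR (Bc ell good n)) in *. set (c := INR (Cnum z eps ell n)) in *.
  assert (HN2 : 2 <= N) by (unfold N; apply (le_INR 2) in Hn2; simpl in Hn2; lra).
  assert (HNN : 0 < N * N) by nra.
  assert (E : c / (N * N) - 1 = (c - N * N) / (N * N)) by (field; lra).
  rewrite E, Rabs_div, (Rabs_right (N * N)) by lra.
  apply (Rmult_le_reg_r (N * N)); auto. unfold Rdiv. rewrite Rmult_assoc, Rinv_l, Rmult_1_r by lra.
  rewrite Rabs_left1 by lra.
  assert (2 * N * b <= d * (N * N)).
  { assert (2 * N * b <= 2 * N * (d / 2 * N)) by (apply Rmult_le_compat_l; lra). nra. }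
  lra.
Qed.

Lemma RR_lim : is_lim_seq (fun n => RR z n eps ell) 1.
Proof.
  apply lim1. intros d Hd. destruct (RR_close ell d ltac:(lia) ltac:(lia) Hd) as [N HN]. exists N.
  intros n Hn. specialize (HN n Hn). rewrite Rabs_left1; lra.
Qed.

Lemma DET_lim : is_lim_seq (fun n => DET z n eps ell) 1.
Proof.
  apply lim1. intros d Hd. set (d' := Rmin (d / 2) (1 / 2)).
  assert (0 < d') by (unfold d'; apply Rmin_glb_lt; lra).
  assert (d' <= d / 2) by apply Rmin_l. assert (d' <= 1 / 2) by apply Rmin_r.
  destruct (ev_and _ _ (RR_close ell d' ltac:(lia) ltac:(lia) H) (RR_close 1 d' ltac:(lia) Hell H)) as [N HN].
  exists N. intros n Hn. destruct (HN n Hn) as [[A1 A2] [B1 B2]]. unfold DET.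
  set (a := RR z n eps ell) in *. set (b := RR z n eps 1) in *.
  assert (E : a / b - 1 = (a - b) / b) by (field; lra).
  rewrite E, Rabs_div, (Rabs_right b) by lra.
  apply (Rmult_le_reg_r b); [lra|]. unfold Rdiv. rewrite Rmult_assoc, Rinv_l, Rmult_1_r by lra.
  apply Rabs_le. split; nra.
Qed.

Lemma Lavg_lim : is_lim_seq (fun n => Lavg z n eps ell) p_infty.
Proof.
  apply is_lim_seq_spec. intros M. set (K := Rabs M + 1).
  assert (HK : 1 <= K) by (unfold K; pose proof (Rabs_pos M); lra).
  assert (HMK : M < K) by (unfold K; pose proof (Rle_abs M); lra).
  destruct (ev_and _ _ (ev_bounds (1 / (8 * K)) ltac:(apply Rdiv_lt_0_compat; lra)) (archN (4 * K + 2))) as [N0 HN].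
  exists N0. intros n Hn. destruct (HN n Hn) as [[Hn2 Hb] HnK].
  destruct (bounds n Hn2) as (P0 & P1 & P2 & P3 & P4 & _).
  destruct (P2 ell Hell (le_n _)) as [Q1 Q2].
  unfold Lavg. rewrite RR_eq, Lambda_eq.
  set (N := INR n) in *. set (b := INR (Bc ell good n)) in *. set (r := INR (RRnum z eps n ell)) in *.
  set (L := INR (LNum z eps ell n)) in *. set (D := N * N - N) in *.
  assert (HN2 : 2 <= N) by (unfold N; apply (le_INR 2) in Hn2; simpl in Hn2; lra).
  assert (Hb8 : 8 * K * b <= N).
  { replace (1 / (8 * K) * N) with (N / (8 * K)) in Hb by (field; lra).
    apply (Rmult_le_compat_l (8 * K)) in Hb; [|lra]. replace (8 * K * (N / (8 * K))) with N in Hb by (field; lra). lra. }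
  assert (Hb0 : 0 <= b) by (unfold b; apply pos_INR).
  assert (HKL : K * L <= r).
  { assert (K * L <= K * (2 * N + 2 * N * b)) by (apply Rmult_le_compat_l; lra).
    assert (8 * K * b * N <= N * N) by (apply Rmult_le_compat_r; lra).
    rewrite P1 in Q2. nra. }
  assert (Hr : 0 < r).
  { assert (0 < K * L \/ L <= 0) by (destruct (Rle_lt_dec L 0); [right|left]; nra).
    destruct H; [lra|]. assert (r <= 0) by nra. rewrite P1 in Q2. nra. }
  assert (HL : 0 < L) by nra.
  replace (r / D / (L / D)) with (r / L) by (field; lra).
  apply (Rmult_lt_reg_r L); auto. unfold Rdiv. rewrite Rmult_assoc, Rinv_l, Rmult_1_r by lra. nra.
Qed.

End Core.


Lemma rho_le {T} (a b : nat -> T) K eps : (forall t, (t < K)%nat -> a t = b t) -> / 2 ^ K <= eps -> rho a b <= eps.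
Proof.
  intros Hab HK. unfold rho. destruct (excluded_middle_informative _) as [H|H].
  - destruct (constructive_indefinite_description _ H) as [d [Hd1 Hd2]]. simpl.
    assert (K <= d)%nat. { destruct (Nat.lt_ge_cases d K); auto. exfalso. apply Hd1. auto. }
    eapply Rle_trans; [|exact HK]. apply Rinv_le_contravar. apply pow_lt; lra. apply Rle_pow; auto; lra.
  - eapply Rle_trans; [|exact HK]. left. apply Rinv_0_lt_compat, pow_lt; lra.
Qed.

Lemma Rleb_true x e : x <= e -> Rleb x e = true.
Proof. unfold Rleb. destruct (Rle_dec x e); [reflexivity | contradiction]. Qed.

Lemma exK eps : 0 < eps -> exists K, / 2 ^ K <= eps.
Proof.
  intros He. destruct (pow_lt_1_zero (1/2) ltac:(rewrite Rabs_right; lra) eps He) as [N HN].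
  exists N. specialize (HN N (le_n _)). rewrite Rabs_right in HN.
  rewrite <- pow_inv. replace (1/2) with (/2) in HN by lra. lra.
  apply Rle_ge, pow_le. lra.
Qed.

Lemma forallb_ind {A} (p : A -> bool) l : (1 <= ind (forallb p l) + lsum l (fun x => ind (negb (p x))))%nat.
Proof. induction l; simpl. lia. destruct (p a); simpl; lia. Qed.

Section Embed.
Variables (y : nat -> bool) (c : bool) (m ell K : nat) (eps : R).
Hypothesis HK : / 2 ^ K <= eps.
Definition W := S (K + m + ell).
Definition goodY (i : nat) : bool := forallb (fun s => Bool.eqb (y (i + s)) c) (seq 0 W).
Definition Dc (N : nat) : nat := lsum (seq 0 N) (fun a => ind (negb (Bool.eqb (y a) c))).

Lemma goodY_spec i s : goodY i = true -> (s < W)%nat -> y (i + s)%nat = c.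
Proof. intros H Hs. unfold goodY in H. rewrite forallb_forall in H. apply eqb_prop, H, in_seq. lia. Qed.

Lemma Hgood_Y i j t : goodY i = true -> goodY j = true -> (t < ell)%nat ->
  entry (embed m y) eps (i + t) (j + t) = true.
Proof.
  intros Gi Gj Ht. unfold entry. apply Rleb_true. apply (rho_le _ _ K); auto.
  intros u Hu. unfold shift, embed. apply map_ext_in. intros v Hv. apply in_seq in Hv.
  replace (i + t + u + v)%nat with (i + (t + u + v))%nat by lia.
  replace (j + t + u + v)%nat with (j + (t + u + v))%nat by lia.
  rewrite (goodY_spec i), (goodY_spec j); auto; unfold W; lia.
Qed.

Lemma bad_le n : (bad goodY n <= W * Dc (n + W))%nat.
Proof.
  unfold bad. eapply Nat.le_trans.
  - apply lsum_le. intros a _. pose proof (forallb_ind (fun s => Bool.eqb (y (a + s)) c) (seq 0 W)).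
    fold (goodY a) in H.
    assert (ind (negb (goodY a)) <= lsum (seq 0 W) (fun s => ind (negb (Bool.eqb (y (a + s)) c))))%nat.
    { destruct (goodY a); simpl in *; lia. } exact H0.
  - rewrite lsum_swap. replace (W * Dc (n + W))%nat with (lsum (seq 0 W) (fun _ => Dc (n + W))) by (rewrite lsum_const, length_seq; reflexivity).
    apply lsum_le. intros s Hs. apply in_seq in Hs. unfold Dc.
    eapply Nat.le_trans. apply (lsum_shift_le (fun a => ind (negb (Bool.eqb (y a) c))) n s).
    apply lsum_seq_mono. lia.
Qed.

Lemma dens_Y : (forall d, 0 < d -> exists N, forall n, (N <= n)%nat -> INR (Dc n) <= d * INR n) ->
  forall d, 0 < d -> exists N, forall n, (N <= n)%nat -> INR (bad goodY n) <= d * INR n.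
Proof.
  intros HD d Hd. assert (HW : 1 <= INR W). { apply (le_INR 1). unfold W; lia. }
  destruct (HD (d / (2 * INR W))) as [N0 HN0]. apply Rdiv_lt_0_compat; lra.
  exists (N0 + W)%nat. intros n Hn.
  pose proof (bad_le n). apply le_INR in H. rewrite mult_INR in H.
  specialize (HN0 (n + W)%nat ltac:(lia)). rewrite plus_INR in HN0.
  assert (INR W <= INR n) by (apply le_INR; lia).
  assert (INR W * INR (Dc (n + W)) <= INR W * (d / (2 * INR W) * (INR n + INR W))).
  { apply Rmult_le_compat_l; lra. }
  replace (INR W * (d / (2 * INR W) * (INR n + INR W))) with (d / 2 * (INR n + INR W)) in H1 by (field; lra).
  nra.
Qed.

End Embed.

Theorem core_from_density (y : nat -> bool) (c : bool) (m ell : nat) (eps : R) :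
  (1 <= ell)%nat -> 0 < eps ->
  (forall d, 0 < d -> exists N, forall n, (N <= n)%nat -> INR (Dc y c n) <= d * INR n) ->
    is_lim_seq (fun n => Csum (embed m y) n eps ell) 1 /\
    is_lim_seq (fun n => RR (embed m y) n eps ell) 1 /\
    is_lim_seq (fun n => DET (embed m y) n eps ell) 1 /\
    is_lim_seq (fun n => Lavg (embed m y) n eps ell) p_infty.
Proof.
  intros Hell He HD. destruct (exK eps He) as [K HK].
  pose proof (Hgood_Y y c m ell K eps HK) as HG.
  pose proof (dens_Y y c m ell K HD) as HDn.
  repeat split.
  - apply (Csum_lim _ _ _ _ Hell HG HDn).
  - apply (RR_lim _ _ _ _ Hell HG HDn).
  - apply (DET_lim _ _ _ _ Hell HG HDn).
  - apply (Lavg_lim _ _ _ _ Hell HG HDn).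
Qed.


Definition cnt (c : bool) (w : list bool) : nat := lsum w (fun x => ind (negb (Bool.eqb x c))).

Lemma cnt_app c u v : cnt c (u ++ v) = (cnt c u + cnt c v)%nat.
Proof. apply lsum_app. Qed.

Lemma lsum_map {A B} (f : A -> B) s g : lsum (map f s) g = lsum s (fun x => g (f x)).
Proof. induction s; simpl; auto. Qed.

Lemma flat_map_comp {A B C} (f : B -> list C) (g : A -> list B) w :
  flat_map f (flat_map g w) = flat_map (fun b => flat_map f (g b)) w.
Proof. induction w; simpl; auto. rewrite flat_map_app, IHw. reflexivity. Qed.

Lemma iter_flat zeta j w : Nat.iter j (subst_word zeta) w = flat_map (subst_iter zeta j) w.
Proof.
  induction j; simpl.
  - induction w; simpl; auto. rewrite <- IHw. reflexivity.
  - rewrite IHj. unfold subst_word. rewrite flat_map_comp. reflexivity.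
Qed.

Lemma subst_iter_add zeta j i a : subst_iter zeta (j + i) a = flat_map (subst_iter zeta j) (subst_iter zeta i a).
Proof. unfold subst_iter at 1. rewrite Nat.iter_add. apply iter_flat. Qed.

Lemma length_subst_word zeta q w : length (zeta false) = q -> length (zeta true) = q ->
  length (subst_word zeta w) = (q * length w)%nat.
Proof.
  intros H0 H1. induction w; simpl. lia. rewrite length_app, IHw. destruct a; [rewrite H1|rewrite H0]; lia.
Qed.

Lemma length_subst_iter zeta q k a : length (zeta false) = q -> length (zeta true) = q ->
  length (subst_iter zeta k a) = (q ^ k)%nat.
Proof.
  intros H0 H1. induction k; simpl. reflexivity.
  change (subst_iter zeta (S k) a) with (subst_word zeta (subst_iter zeta k a)).
  rewrite (length_subst_word zeta q) by auto. rewrite IHk. lia.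
Qed.

Lemma cnt_subst_word zeta c r w : cnt c (zeta c) = 0%nat -> cnt c (zeta (negb c)) = r ->
  cnt c (subst_word zeta w) = (r * cnt c w)%nat.
Proof.
  intros H0 H1. induction w; simpl. unfold cnt; simpl; lia.
  fold (subst_word zeta w). rewrite cnt_app, IHw. unfold cnt at 3. simpl. fold (cnt c w).
  destruct a, c; simpl in *; rewrite ?H0, ?H1; lia.
Qed.

Lemma cnt_subst_iter zeta c r j b : cnt c (zeta c) = 0%nat -> cnt c (zeta (negb c)) = r ->
  (cnt c (subst_iter zeta j b) <= r ^ j)%nat.
Proof.
  intros H0 H1. assert (forall j, cnt c (subst_iter zeta j b) = (r ^ j * cnt c [b])%nat).
  { induction j0. simpl. lia. change (subst_iter zeta (S j0) b) with (subst_word zeta (subst_iter zeta j0 b)).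
    rewrite (cnt_subst_word zeta c r); auto. rewrite IHj0. simpl. lia. }
  rewrite H. unfold cnt; simpl. pose proof (ind_le1 (negb (Bool.eqb b c))). nia.
Qed.

Section Blocks.
Variables (c : bool) (g : bool -> list bool) (M R : nat).
Hypothesis HM : forall b, length (g b) = M.
Hypothesis HR : forall b, (cnt c (g b) <= R)%nat.

Lemma prefix_block w : forall u s, u ++ s = flat_map g w -> (M * cnt c u <= (length u + M) * R)%nat.
Proof.
  induction w; intros u s H; simpl in H.
  - apply app_eq_nil in H. destruct H; subst. unfold cnt; simpl. lia.
  - destruct (app_eq_app _ _ _ _ H) as [l [[E1 E2]|[E1 E2]]].
    + subst u. specialize (IHw l s (eq_sym E2)). rewrite cnt_app, length_app, HM.
      specialize (HR a). nia.
    + assert (cnt c u <= R)%nat. { specialize (HR a). rewrite E1, cnt_app in HR. lia. } nia.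
Qed.

Lemma subword_block w : forall p u s, p ++ u ++ s = flat_map g w -> (M * cnt c u <= (length u + 2 * M) * R)%nat.
Proof.
  induction w; intros p u s H; simpl in H.
  - apply app_eq_nil in H. destruct H as [_ H]. apply app_eq_nil in H. destruct H; subst. unfold cnt; simpl. lia.
  - destruct (app_eq_app _ _ _ _ H) as [l [[E1 E2]|[E1 E2]]].
    + eapply IHw. symmetry. exact E2.
    + destruct (app_eq_app _ _ _ _ E2) as [l' [[F1 F2]|[F1 F2]]].
      * subst u. pose proof (prefix_block w l' s (eq_sym F2)).
        assert (cnt c l <= R)%nat. { specialize (HR a). rewrite E1, cnt_app in HR. lia. }
        rewrite cnt_app, length_app. nia.
      * assert (cnt c u <= R)%nat. { specialize (HR a). rewrite E1, F1, !cnt_app in HR. lia. } nia.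
Qed.
End Blocks.

Lemma Dc_cnt y c N : Dc y c N = cnt c (map y (seq 0 N)).
Proof. unfold Dc, cnt. rewrite lsum_map. reflexivity. Qed.

Lemma geom_small q d : (2 <= q)%nat -> 0 < d -> exists j, INR ((q - 1) ^ j) <= d * INR (q ^ j).
Proof.
  intros Hq Hd. set (x := INR (q - 1) / INR q).
  assert (Hq0 : 2 <= INR q) by (apply (le_INR 2) in Hq; simpl in Hq; lra).
  assert (HQ1 : INR (q - 1) = INR q - 1) by (rewrite minus_INR by lia; simpl; lra).
  assert (0 <= x < 1).
  { unfold x. rewrite HQ1. split. unfold Rdiv. apply Rmult_le_pos; [lra| left; apply Rinv_0_lt_compat; lra]. unfold Rdiv. apply (Rmult_lt_reg_r (INR q)); [lra|]. rewrite Rmult_assoc, Rinv_l, Rmult_1_r by lra. lra. }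
  destruct (pow_lt_1_zero x ltac:(rewrite Rabs_right; lra) d Hd) as [j Hj].
  exists j. specialize (Hj j (le_n _)). rewrite Rabs_right in Hj by (apply Rle_ge, pow_le; lra).
  unfold x in Hj. unfold Rdiv in Hj. rewrite Rpow_mult_distr, pow_inv in Hj. rewrite !pow_INR.
  assert (0 < INR q ^ j) by (apply pow_lt; lra).
  apply (Rmult_lt_compat_r (INR q ^ j)) in Hj; auto. unfold Rdiv in Hj.
  rewrite Rmult_assoc, Rinv_l, Rmult_1_r in Hj by lra. lra.
Qed.

Lemma density_B zeta q c r y : uniform_subst zeta q -> cnt c (zeta c) = 0%nat -> cnt c (zeta (negb c)) = r ->
  (r <= q - 1)%nat -> in_X zeta y ->
  forall d, 0 < d -> exists N, forall n, (N <= n)%nat -> INR (Dc y c n) <= d * INR n.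
Proof.
  intros [Hq [L0 L1]] H0 H1 Hr HX d Hd.
  destruct (geom_small q (d / 3) Hq ltac:(lra)) as [j Hj].
  exists (q ^ j)%nat. intros N HN.
  destruct (HX N) as [a [k [Hk [p [s Hps]]]]].
  assert (Hlen : (N <= q ^ k)%nat).
  { rewrite <- (length_subst_iter zeta q k a), Hps; auto. rewrite !length_app, length_map, length_seq. lia. }
  assert (Hjk : (j <= k)%nat).
  { destruct (Nat.le_gt_cases j k); auto. assert (q ^ k < q ^ j)%nat by (apply Nat.pow_lt_mono_r; lia). lia. }
  replace k with (j + (k - j))%nat in Hps by lia. rewrite subst_iter_add in Hps.
  pose proof (subword_block c (subst_iter zeta j) (q ^ j) (r ^ j)
    (fun b => length_subst_iter zeta q j b L0 L1) (fun b => cnt_subst_iter zeta c r j b H0 H1)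
    _ _ _ _ (eq_sym Hps)) as HB.
  rewrite length_map, length_seq, <- Dc_cnt in HB.
  assert (Hrj : (r ^ j <= (q - 1) ^ j)%nat) by (apply Nat.pow_le_mono_l; lia).
  apply le_INR in HB, Hrj, HN. rewrite !mult_INR, plus_INR, mult_INR in HB. simpl in HB.
  assert (0 < INR (q ^ j)) by (apply lt_0_INR, Nat.neq_0_lt_0, Nat.pow_nonzero; lia).
  assert (0 <= INR (r ^ j)) by apply pos_INR.
  assert (0 <= INR (Dc y c N)) by apply pos_INR.
  set (Q := INR (q ^ j)) in *. set (Rj := INR (r ^ j)) in *. set (Dn := INR (Dc y c N)) in *.
  set (NN := INR N) in *.
  assert (Q * Dn <= 3 * NN * Rj) by nra.
  assert (3 * NN * Rj <= 3 * NN * (d / 3 * Q)).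
  { apply Rmult_le_compat_l; [nra|]. lra. }
  nra.
Qed.

Lemma const_iter zeta (Hc : forall a, exists e, forall x, In x (zeta a) -> x = e) k a :
  exists e, forall x, In x (subst_iter zeta k a) -> x = e.
Proof.
  induction k.
  - exists a. simpl. intros x [H|[]]; auto.
  - destruct IHk as [e0 He0]. destruct (Hc e0) as [e1 He1]. exists e1. intros x Hx.
    change (subst_iter zeta (S k) a) with (subst_word zeta (subst_iter zeta k a)) in Hx.
    unfold subst_word in Hx. apply in_flat_map in Hx. destruct Hx as [b [Hb Hx]].
    rewrite (He0 b Hb) in Hx. auto.
Qed.

Lemma density_A zeta y : (forall a, exists e, forall x, In x (zeta a) -> x = e) -> in_X zeta y ->
  forall d, 0 < d -> exists N, forall n, (N <= n)%nat -> INR (Dc y (y 0%nat) n) <= d * INR n.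
Proof.
  intros Hc HX d Hd. exists 0%nat. intros n _.
  assert (E : forall i, y i = y 0%nat).
  { intros i. destruct (HX (S i)) as [a [k [_ [p [s Hps]]]]].
    destruct (const_iter zeta Hc k a) as [e He].
    assert (forall t, (t < S i)%nat -> y t = e).
    { intros t Ht. apply He. rewrite Hps. apply in_or_app. right. apply in_or_app. left.
      apply in_map, in_seq. lia. }
    rewrite (H i), (H 0%nat); auto; lia. }
  assert (Dc y (y 0%nat) n = 0%nat).
  { unfold Dc. rewrite (lsum_ext _ _ (fun _ => 0%nat)). rewrite lsum_const. lia.
    intros a _. rewrite E, eqb_reflx. reflexivity. }
  rewrite H. simpl. pose proof (pos_INR n). nra.
Qed.


Lemma cnt_le_len c w : (cnt c w <= length w)%nat.
Proof. unfold cnt. induction w; simpl; auto. pose proof (ind_le1 (negb (Bool.eqb a c))). lia. Qed.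

Lemma cnt_lt c w : In c w -> (cnt c w < length w)%nat.
Proof.
  induction w; simpl; [tauto|]. intros [H|H].
  - subst c. pose proof (cnt_le_len a w). unfold cnt in *. simpl. rewrite eqb_reflx. simpl. lia.
  - specialize (IHw H). unfold cnt in *. simpl. pose proof (ind_le1 (negb (Bool.eqb a c))). lia.
Qed.

Lemma cnt_all c w : (forall x, In x w -> x = c) -> cnt c w = 0%nat.
Proof.
  unfold cnt. induction w; simpl; auto. intros H. rewrite (H a (or_introl eq_refl)), eqb_reflx. simpl.
  apply IHw. auto.
Qed.

Lemma const_or_mixed (w : list bool) : (exists e, forall x, In x w -> x = e) \/ (In true w /\ In false w).
Proof.
  destruct (classic (In true w)) as [Ht|Ht]; destruct (classic (In false w)) as [Hf|Hf];
    [right; auto | left; exists true | left; exists false | left; exists true];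
    intros x Hx; destruct x; auto; contradiction.
Qed.

Lemma in_mixed w b : In true w /\ In false w -> In b w.
Proof. destruct b; tauto. Qed.

Lemma classify zeta q : uniform_subst zeta q -> ~ subst_primitive zeta ->
  (forall a, exists e, forall x, In x (zeta a) -> x = e) \/
  exists c, (forall x, In x (zeta c) -> x = c) /\ In c (zeta (negb c)).
Proof.
  intros [Hq [L0 L1]] HNP.
  assert (NE : forall a, exists x, In x (zeta a)).
  { intros a. destruct (zeta a) eqn:E. destruct a; [rewrite E in L1|rewrite E in L0]; simpl in *; lia.
    exists b; simpl; auto. }
  destruct (classic (forall a, exists e, forall x, In x (zeta a) -> x = e)) as [H|H]; [left; auto|right].
  apply not_all_ex_not in H. destruct H as [a0 Ha0].
  assert (Mx : In true (zeta a0) /\ In false (zeta a0)).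
  { destruct (const_or_mixed (zeta a0)); auto. contradiction. }
  assert (H1 : exists a1 b1, ~ In b1 (zeta a1)).
  { apply NNPP. intro HN. apply HNP. exists 1%nat. split; auto. intros a b.
    unfold subst_iter. simpl. rewrite app_nil_r. apply NNPP. intro HH. apply HN. eauto. }
  destruct H1 as [a1 [b1 Hb1]].
  assert (A1 : a1 = negb a0).
  { destruct (bool_dec a1 a0). subst. exfalso. apply Hb1, in_mixed, Mx. destruct a0, a1; simpl; congruence. }
  assert (C1 : forall x, In x (zeta a1) -> x = negb b1).
  { intros x Hx. destruct x, b1; simpl; auto; contradiction. }
  destruct (bool_dec (negb b1) a1) as [E|E].
  - exists a1. split. intros x Hx. rewrite <- E. auto. subst a1. rewrite negb_involutive. apply in_mixed; auto.
  - exfalso. apply HNP. exists 2%nat. split; auto. intros a b.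
    unfold subst_iter. simpl. rewrite app_nil_r. unfold subst_word. apply in_flat_map.
    exists a0. split; [| apply in_mixed; auto].
    destruct (bool_dec a a0).
    + subst. apply in_mixed; auto.
    + assert (a = a1) by (subst a1; destruct a, a0; simpl in *; congruence). subst a.
      destruct (NE a1) as [x Hx]. rewrite (C1 x Hx) in Hx.
      replace a0 with (negb b1); auto. subst a1. destruct a0, b1; simpl in *; congruence.
Qed.

Theorem theorem1p2 (zeta : bool -> list bool) (q : nat) :
  uniform_subst zeta q -> ~ subst_primitive zeta ->
  forall (y : nat -> bool), in_X zeta y ->
  forall (m ell : nat) (eps : R), (1 <= m)%nat -> (1 <= ell)%nat -> 0 < eps ->
    is_lim_seq (fun n => Csum (embed m y) n eps ell) 1 /\
    is_lim_seq (fun n => RR (embed m y) n eps ell) 1 /\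
    is_lim_seq (fun n => DET (embed m y) n eps ell) 1 /\
    is_lim_seq (fun n => Lavg (embed m y) n eps ell) p_infty.
Proof.
  intros HU HNP y HX m ell eps Hm Hell He.
  destruct (classify zeta q HU HNP) as [HC | [c [Hc1 Hc2]]].
  - apply (core_from_density y (y 0%nat)); auto. apply (density_A zeta); auto.
  - apply (core_from_density y c); auto.
    destruct HU as [Hq [L0 L1]].
    apply (density_B zeta q c (cnt c (zeta (negb c)))); auto.
    + split; auto.
    + apply cnt_all; auto.
    + pose proof (cnt_lt c (zeta (negb c)) Hc2). destruct c; simpl in *; lia.
Qed.
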